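(* Let $N\ge3$ and let ${\bf k}=(k_0,\dots,k_{r-1})$ with every $k_m\ge1$ and $\sum_m k_m=N$. For $0\le m\le r-1$ let ${\bf k}^{(m)}$ be obtained from ${\bf k}$ by replacing $k_m$ by $k_m-1$. Then $$\Delta_{N,{\bf k}}\ \ge\ \frac{N(N-2)}{(N-1)^2}\,\min\{\Delta_{N-1,{\bf k}^{(m)}}:\ 0\le m\le r-1\}.$$
   Context: Fix $r\ge2$, distinct reals $e_0,\dots,e_{r-1}$. For $M\ge2$ and ${\bf j}=(j_0,\dots,j_{r-1})$ nonnegative integers with $\sum_m j_m=M$, the multislice $\mathcal{V}_{M,{\bf j}}$ is the set of $x\in\{e_0,\dots,e_{r-1}\}^M$ with exactly $j_m$ coordinates equal to $e_m$ for each $m$; $\mu_{M,{\bf j}}$ is the uniform probability measure on it. For $i<j$, $\pi_{i,j}x$ swaps coordinates $i$ and $j$ of $x$. The Dirichlet form is $$\mathcal{D}_{M,{\bf j}}(f,f)=\frac{1}{M-1}\sum_{x\in\mathcal{V}_{M,{\bf j}}}\sum_{1\le i<j\le M}(f(\pi_{i,j}x)-f(x))^2\,\mu_{M,{\bf j}}(x),$$ and $\Delta_{M,{\bf j}}=\inf\{\mathcal{D}_{M,{\bf j}}(f,f):\ \|f\|_{L^2(\mu_{M,{\bf j}})}=1,\ \langle f,1\rangle_{L^2(\mu_{M,{\bf j}})}=0\}$, with the convention that the infimum over an empty set (when $\mathcal{V}_{M,{\bf j}}$ is a single point) is $+\infty$. *)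

(* Defs.v *)
From HB Require Import structures.
From mathcomp Require Import all_boot all_order all_algebra.
From mathcomp Require Import all_classical all_reals ereal.
Set Implicit Arguments. Unset Strict Implicit. Unset Printing Implicit Defensive.
Import Order.TTheory GRing.Theory Num.Theory.
Local Open Scope ring_scope.
Local Open Scope classical_set_scope.

Section Multislice.
Variables (R : realType) (r : nat) (e : 'I_r -> R).

(* Colourings c : 'I_M -> 'I_r with exactly j m coordinates of colour m.
   The multislice point attached to c is x = e o c (coordinate i equals e_(c i)). *)
Definition mslice (M : nat) (j : 'I_r -> nat) : {set {ffun 'I_M -> 'I_r}} :=
  [set c : {ffun 'I_M -> 'I_r} | [forall m : 'I_r, #|[pred i | c i == m]| == j m]].

Definition mpoint (M : nat) (c : {ffun 'I_M -> 'I_r}) : 'I_M -> R :=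
  fun i => e (c i).

Definition swapc (M : nat) (i j : 'I_M) (x : 'I_M -> R) : 'I_M -> R :=
  fun k => if k == i then x j else if k == j then x i else x k.

Definition mexp (M : nat) (j : 'I_r -> nat) (g : ('I_M -> R) -> R) : R :=
  \sum_(c in mslice M j) g (mpoint c) / #|mslice M j|%:R.

Definition dirichlet (M : nat) (j : 'I_r -> nat) (f : ('I_M -> R) -> R) : R :=
  (M.-1)%:R^-1 *
  mexp j (fun x => \sum_(i < M) \sum_(i' < M | (i < i')%N)
                     (f (swapc i i' x) - f x) ^+ 2).

(* Delta_{M,j} : infimum (in \bar R; inf of the empty set is +oo) *)
Definition gap (M : nat) (j : 'I_r -> nat) : \bar R :=
  ereal_inf [set y : \bar R | exists f : ('I_M -> R) -> R,
     [/\ mexp j (fun x => f x ^+ 2) = 1,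
         mexp j (fun x => f x) = 0 &
         y = (dirichlet j f)%:E]].

End Multislice.

Definition kdec (r : nat) (k : 'I_r -> nat) (m : 'I_r) : 'I_r -> nat :=
  fun l => if l == m then (k l).-1 else k l.

(* Main.v *)
Require Import Defs.
From HB Require Import structures.
From mathcomp Require Import all_boot all_order all_algebra.
From mathcomp Require Import all_classical all_reals ereal.
From mathcomp Require Import fingroup perm ring lra zify.
Import Order.TTheory GRing.Theory Num.Theory.
Local Open Scope ring_scope.

Section Part1.
Variables (R : realType) (r : nat).

Lemma sum_ind_mul (a : 'I_r) (g : 'I_r -> R) :
  \sum_(m < r) ((a == m)%:R * g m) = g a.
Proof.
rewrite (bigD1 a) //= eqxx mul1r big1 ?addr0 // => m /negbTE.
by rewrite eq_sym => ->; rewrite mul0r.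
Qed.

Lemma sum_ind_card N (P : pred 'I_N) :
  \sum_(x < N) ((P x)%:R : R) = #|P|%:R.
Proof.
rewrite -sum1_card natr_sum [RHS]big_mkcond /=; apply: eq_bigr => x _.
by rewrite unfold_in; case: (P x).
Qed.

Lemma mslice_cnt N (k : 'I_r -> nat) (c : {ffun 'I_N -> 'I_r}) m :
  c \in mslice N k -> \sum_(x < N) ((c x == m)%:R : R) = (k m)%:R.
Proof.
rewrite inE => /forallP /(_ m) /eqP H.
by rewrite (@sum_ind_card N (fun x => c x == m)) -H.
Qed.

Lemma sum_perm N (k : 'I_r -> nat) (G : {ffun 'I_N -> 'I_r} -> R)
  (s : {perm 'I_N}) :
  \sum_(c in mslice N k) G c = \sum_(c in mslice N k) G [ffun x => c (s x)].
Proof.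
set h := fun c : {ffun 'I_N -> 'I_r} => [ffun x => c (s x)].
have hinj : injective h.
  move=> c1 c2 /ffunP E; apply/ffunP => x; have := E (s^-1 x)%g.
  by rewrite !ffunE permKV.
rewrite [LHS](reindex_inj hinj) /=; apply: eq_bigl => c.
rewrite !inE; apply: eq_forallb => m; congr (_ == _).
rewrite -!sum1_card [in RHS](reindex_inj (@perm_inj _ s)) /=.
by apply: eq_bigl => x; rewrite /h /= ?ffunE unfold_in /= ?ffunE.
Qed.

End Part1.
Section Part2.
Variables (R : realType) (r N : nat) (k : 'I_r -> nat).
Variable F : {ffun 'I_N -> 'I_r} -> R.
Hypothesis kpos : forall m, (0 < k m)%N.
Hypothesis npos : (0 < #|mslice N k|)%N.
Hypothesis N2 : (1 < N)%N.
Hypothesis F0 : \sum_(c in mslice N k) F c = 0.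

Local Notation Om := (mslice N k).
Definition ww i m : R := \sum_(c in Om) ((c i == m)%:R : R).
Definition ss i m : R := \sum_(c in Om) ((c i == m)%:R * F c).
Definition PP i m j l : R := \sum_(c in Om) ((c i == m)%:R * (c j == l)%:R : R).

Lemma ww_sym i i' m : ww i m = ww i' m.
Proof.
rewrite /ww (sum_perm _ _ _ _ _ (tperm i i')); apply: eq_bigr => c _.
by rewrite ffunE tpermL.
Qed.

Lemma ww_val i m : N%:R * ww i m = #|Om|%:R * (k m)%:R.
Proof.
have -> : N%:R * ww i m = \sum_(i' < N) ww i' m.
  by rewrite (eq_bigr (fun _ => ww i m)) ?sumr_const ?card_ord ?mulr_natl //
     => i' _; apply: ww_sym.
rewrite /ww exchange_big /= (eq_bigr (fun _ => (k m)%:R)).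
  by rewrite sumr_const mulr_natl.
move=> c Hc; exact: (mslice_cnt _ _ _ _ _ _ Hc).
Qed.


Lemma npos_r : (0 : R) < #|Om|%:R.
Proof. by rewrite ltr0n. Qed.

Lemma Npos_r : (0 : R) < N%:R.
Proof. by rewrite ltr0n; apply: ltn_trans N2. Qed.

Lemma ww_pos i m : 0 < ww i m.
Proof.
have := ww_val i m => E.
have : 0 < N%:R * ww i m by rewrite E mulr_gt0 ?ltr0n ?kpos.
by rewrite pmulr_rgt0 // Npos_r.
Qed.

Lemma sum_excl (i : 'I_N) (G : 'I_N -> R) :
  \sum_(j < N | j != i) G j = \sum_(j < N) G j - G i.
Proof. by rewrite [X in _ = X - _](bigD1 i) //= addrC addrK. Qed.

Lemma ind_sum1 (a : 'I_r) : \sum_(l < r) ((a == l)%:R : R) = 1.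
Proof. by rewrite -[RHS](sum_ind_mul _ _ a (fun _ => 1)); apply: eq_bigr => l _; rewrite mulr1. Qed.

Lemma PP_sym i m j j' l : j != i -> j' != i -> PP i m j l = PP i m j' l.
Proof.
move=> ji j'i.
rewrite /PP (sum_perm _ _ _ _ _ (tperm j j')); apply: eq_bigr => c _.
rewrite !ffunE tpermL tpermD //; by rewrite eq_sym.
Qed.

Lemma PP_diag i m l : PP i m i l = (m == l)%:R * ww i m.
Proof.
rewrite /PP /ww mulr_sumr; apply: eq_bigr => c _.
by case: (eqVneq (c i) m) => [->|]; rewrite ?mul0r ?mulr0 ?mul1r ?mulr1.
Qed.

Lemma PP_val i m j l : j != i ->
  (N%:R - 1) * PP i m j l = ww i m * ((k l)%:R - (m == l)%:R).
Proof.
move=> ji.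
have E1 : \sum_(j' < N | j' != i) PP i m j' l = (N%:R - 1) * PP i m j l.
  rewrite (eq_bigr (fun _ => PP i m j l)); last first.
    by move=> j' j'i; apply: PP_sym.
  by rewrite sum_excl sumr_const card_ord mulrBl mul1r mulr_natl.
rewrite -E1 /PP exchange_big /= /ww mulr_suml; apply: eq_bigr => c Hc.
rewrite -mulr_sumr sum_excl (mslice_cnt _ _ _ _ _ _ Hc).
by case: (eqVneq (c i) m) => [->|]; rewrite ?mul0r ?mul1r.
Qed.

Definition aa i m := ss i m / ww i m.
Definition hh (c : {ffun 'I_N -> 'I_r}) := \sum_(i < N) aa i (c i).
Definition ZZ := \sum_(i < N) \sum_(m < r) ss i m ^+ 2 / ww i m.

Lemma aa_ww i m : aa i m * ww i m = ss i m.
Proof. by rewrite /aa mulrVK // unitfE gt_eqF // ww_pos. Qed.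

Lemma sum_aa m : \sum_(i < N) aa i m = 0.
Proof.
pose i0 : 'I_N := Ordinal (ltn_trans (ltnSn 0) N2).
rewrite (eq_bigr (fun i => ss i m / ww i0 m)); last by move=> i _; rewrite /aa (ww_sym i i0).
rewrite -mulr_suml /ss exchange_big /=.
rewrite (eq_bigr (fun c => (k m)%:R * F c)); first by rewrite -mulr_sumr F0 mulr0 mul0r.
move=> c Hc; rewrite -mulr_suml (mslice_cnt _ _ _ _ _ _ Hc) //.
Qed.

Lemma sum_k_aa i : \sum_(l < r) (k l)%:R * aa i l = 0.
Proof.
have E l : (k l)%:R * aa i l = N%:R / #|Om|%:R * ss i l.
  have Hk : (k l)%:R = N%:R / #|Om|%:R * ww i l.
    by rewrite mulrAC ww_val mulrAC mulfV ?mul1r // gt_eqF // npos_r.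
  rewrite Hk -(aa_ww i l); ring.
rewrite (eq_bigr _ (fun l _ => E l)) -mulr_sumr /ss exchange_big /=.
rewrite (eq_bigr (fun c => F c)); first by rewrite F0 mulr0.
by move=> c _; rewrite -mulr_suml ind_sum1 mul1r.
Qed.

Lemma FH : \sum_(c in Om) F c * hh c = ZZ.
Proof.
rewrite /hh (eq_bigr (fun c : {ffun 'I_N -> 'I_r} => \sum_(i < N) \sum_(m < r) aa i m * ((c i == m)%:R * F c))); last first.
  move=> c _; rewrite mulr_sumr; apply: eq_bigr => i _.
  rewrite -(sum_ind_mul _ _ (c i) (aa i)) mulr_sumr; apply: eq_bigr => m _.
  ring.
rewrite exchange_big /= /ZZ; apply: eq_bigr => i _.
rewrite exchange_big /=; apply: eq_bigr => m _.
by rewrite -mulr_sumr /aa /ss expr2 mulrAC.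
Qed.

Lemma Hf i m : (N%:R - 1) * \sum_(c in Om) (c i == m)%:R * hh c = N%:R * ss i m.
Proof.
have E : \sum_(c in Om) (c i == m)%:R * hh c =
   \sum_(j < N) \sum_(l < r) aa j l * PP i m j l.
  rewrite /hh (eq_bigr (fun c : {ffun 'I_N -> 'I_r} => \sum_(j < N) \sum_(l < r) aa j l * ((c i == m)%:R * (c j == l)%:R))); last first.
    move=> c _; rewrite mulr_sumr; apply: eq_bigr => j _.
    rewrite -(sum_ind_mul _ _ (c j) (aa j)) mulr_sumr; apply: eq_bigr => l _.
    ring.
  rewrite exchange_big /=; apply: eq_bigr => j _.
  rewrite exchange_big /=; apply: eq_bigr => l _.
  by rewrite /PP mulr_sumr.
rewrite E (bigD1 i) //= mulrDr.
have -> : \sum_(l < r) aa i l * PP i m i l = ss i m.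
  rewrite (eq_bigr (fun l => (m == l)%:R * (aa i l * ww i m))); last first.
    by move=> l _; rewrite PP_diag mulrCA.
  by rewrite sum_ind_mul aa_ww.
have -> : (N%:R - 1) * \sum_(j < N | j != i) \sum_(l < r) aa j l * PP i m j l = ss i m.
  rewrite mulr_sumr (eq_bigr (fun j => - (ww i m * aa j m))); last first.
    move=> j ji; rewrite mulr_sumr.
    rewrite (eq_bigr (fun l => ww i m * ((k l)%:R * aa j l) - ww i m * ((m == l)%:R * aa j l))); last first.
      move=> l _; rewrite mulrCA PP_val //; ring.
    rewrite sumrB -!mulr_sumr sum_k_aa sum_ind_mul; ring.
  rewrite sumrN sum_excl -mulr_sumr sum_aa -(aa_ww i m); ring.
ring.
Qed.

Lemma HH : (N%:R - 1) * \sum_(c in Om) hh c ^+ 2 = N%:R * ZZ.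
Proof.
rewrite (eq_bigr (fun c : {ffun 'I_N -> 'I_r} => \sum_(i < N) \sum_(m < r) aa i m * ((c i == m)%:R * hh c))); last first.
  move=> c _; rewrite expr2 {1}/hh mulr_suml; apply: eq_bigr => i _.
  rewrite -(sum_ind_mul _ _ (c i) (aa i)) mulr_suml; apply: eq_bigr => m _.
  ring.
rewrite exchange_big /= /ZZ !mulr_sumr; apply: eq_bigr => i _.
rewrite exchange_big /= !mulr_sumr; apply: eq_bigr => m _.
rewrite -mulr_sumr mulrCA Hf /aa; ring.
Qed.

Lemma Zbound : (N%:R - 1) * ZZ <= N%:R * \sum_(c in Om) F c ^+ 2.
Proof.
pose b : R := (N%:R - 1) / N%:R.
have Hn := Npos_r.
have H0 : 0 <= \sum_(c in Om) (F c - b * hh c) ^+ 2 by apply: sumr_ge0 => c _; apply: sqr_ge0.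
have E : \sum_(c in Om) (F c - b * hh c) ^+ 2 =
   \sum_(c in Om) F c ^+ 2 - 2 * b * \sum_(c in Om) F c * hh c + b ^+ 2 * \sum_(c in Om) hh c ^+ 2.
  rewrite !mulr_sumr -sumrB -big_split /=; apply: eq_bigr => c _; ring.
have E2 : \sum_(c in Om) hh c ^+ 2 = N%:R * ZZ / (N%:R - 1).
  rewrite -HH mulrAC divff ?mul1r // subr_eq0 pnatr_eq1; by case: N N2 => [|[]].
rewrite E FH E2 in H0.
have Hb : b ^+ 2 * (N%:R * ZZ / (N%:R - 1)) = b * ZZ.
  rewrite /b; field.
  rewrite subr_eq0 pnatr_eq1 gt_eqF //; by case: N N2 => [|[]].
rewrite Hb in H0.
have HbZ : b * ZZ <= \sum_(c in Om) F c ^+ 2 by lra.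
have -> : (N%:R - 1) * ZZ = N%:R * (b * ZZ) by rewrite /b; field; rewrite gt_eqF.
by rewrite ler_pM2l.
Qed.


End Part2.

Section Part3.
Variables (R : realType) (r : nat) (e : 'I_r -> R) (M : nat) (k : 'I_r -> nat).
Variables (i : 'I_M.+1) (m : 'I_r).

Definition ins (d : {ffun 'I_M -> 'I_r}) : {ffun 'I_M.+1 -> 'I_r} :=
  [ffun x => if unlift i x is Some y then d y else m].
Definition res (c : {ffun 'I_M.+1 -> 'I_r}) : {ffun 'I_M -> 'I_r} :=
  [ffun y => c (lift i y)].

Lemma res_ins d : res (ins d) = d.
Proof. by apply/ffunP => y; rewrite !ffunE liftK. Qed.

Lemma ins_i d : ins d i = m.
Proof. by rewrite ffunE unlift_none. Qed.

Lemma ins_lift (d : {ffun 'I_M -> 'I_r}) y : ins d (lift i y) = d y.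
Proof. by rewrite ffunE liftK. Qed.

Lemma ins_res (c : {ffun 'I_M.+1 -> 'I_r}) : c i = m -> ins (res c) = c.
Proof.
move=> ci; apply/ffunP => x; rewrite !ffunE.
by case: unliftP => [y ->|->]; rewrite ?ffunE.
Qed.

Lemma card_sum n (P : pred 'I_n) : #|P| = (\sum_(x < n) P x)%N.
Proof.
rewrite -sum1_card [LHS]big_mkcond /=; apply: eq_bigr => x _.
by rewrite unfold_in; case: (P x).
Qed.

Lemma ins_cnt d l :
  #|[pred x | ins d x == l]| = ((m == l) + #|[pred y | d y == l]|)%N.
Proof.
rewrite !card_sum (bigD1_ord i) //= ins_i; congr (_ + _)%N.
by apply: eq_bigr => y _; rewrite ins_lift.
Qed.

Lemma lift_lt (j j' : 'I_M) : (lift i j < lift i j')%N = (j < j')%N.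
Proof. rewrite /= /bump; case: (leqP i j); case: (leqP i j') => *; lia. Qed.

Hypothesis km : (0 < k m)%N.

Lemma ins_mem d : (ins d \in mslice M.+1 k) = (d \in mslice M (kdec k m)).
Proof.
rewrite !inE; apply: eq_forallb => l; rewrite ins_cnt /kdec.
case: (eqVneq l m) => [->|ne]; last by [].
by rewrite -{1}(prednK km) add1n eqSS.
Qed.

Lemma fiber_sum (G : {ffun 'I_M.+1 -> 'I_r} -> R) :
  \sum_(c in mslice M.+1 k) (c i == m)%:R * G c =
  \sum_(d in mslice M (kdec k m)) G (ins d).
Proof.
rewrite (eq_bigr (fun c : {ffun 'I_M.+1 -> 'I_r} => if c i == m then G c else 0)); last first.
  by move=> c _; case: (c i == m); rewrite ?mul1r ?mul0r.
rewrite -big_mkcondr /= (reindex_onto ins res); last first.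
  by move=> c /andP [_ /eqP]; apply: ins_res.
apply: eq_bigl => d; by rewrite ins_mem ins_i res_ins !eqxx !andbT.
Qed.

Definition fres (f : ('I_M.+1 -> R) -> R) (y : 'I_M -> R) : R :=
  f (fun x => if unlift i x is Some z then y z else e m).

Lemma fres_pt f d : fres f (mpoint e d) = f (mpoint e (ins d)).
Proof.
rewrite /fres; congr f; apply: boolp.funext => x; rewrite /mpoint ffunE.
by case: unlift.
Qed.


Lemma fres_swap f d j j' :
  fres f (swapc j j' (mpoint e d)) =
  f (swapc (lift i j) (lift i j') (mpoint e (ins d))).
Proof.
rewrite /fres; congr f; apply: boolp.funext => x; rewrite /swapc /mpoint.
case: unliftP => [z ->|->].
  by rewrite !(inj_eq (@lift_inj _ i)) !ins_lift.
by rewrite !(negbTE (neq_lift _ _)) ins_i.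
Qed.

End Part3.

Section Part3b.
Variables (R : realType) (r : nat) (e : 'I_r -> R) (M : nat).
Variables (i : 'I_M.+1) (m : 'I_r) (f : ('I_M.+1 -> R) -> R).

Lemma pair_fiber (d : {ffun 'I_M -> 'I_r}) :
  \sum_(j < M) \sum_(j' < M | (j < j')%N)
     (@fres R r e M i m f (swapc j j' (mpoint e d)) - @fres R r e M i m f (mpoint e d)) ^+ 2
  = \sum_(x < M.+1) \sum_(x' < M.+1 | (x < x')%N)
     ((x != i) && (x' != i))%:R *
     (f (swapc x x' (mpoint e (@ins r M i m d))) - f (mpoint e (@ins r M i m d))) ^+ 2.
Proof.
have L y : (lift i y != i) = true by rewrite eq_sym neq_lift.
rewrite [RHS](bigD1_ord i) //= [X in _ = X + _]big1 ?add0r; last first.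
  by move=> x' _; rewrite eqxx /= mul0r.
apply: eq_bigr => j _.
rewrite [RHS]big_mkcond [RHS](bigD1_ord i) //= eqxx andbF mul0r if_same add0r.
rewrite big_mkcond; apply: eq_bigr => j' _.
by rewrite lift_lt !L /= mul1r fres_swap fres_pt.
Qed.
End Part3b.

Lemma pair_total (R : realType) N (G : 'I_N -> 'I_N -> R) :
 \sum_(i < N) \sum_(x < N) \sum_(x' < N | (x < x')%N)
    ((x != i) && (x' != i))%:R * G x x'
 = (N%:R - 2) * \sum_(x < N) \sum_(x' < N | (x < x')%N) G x x'.
Proof.
rewrite exchange_big mulr_sumr; apply: eq_bigr => x _ /=.
rewrite exchange_big mulr_sumr; apply: eq_bigr => x' lt /=.
rewrite -mulr_suml; congr (_ * _).
rewrite (eq_bigr (fun i => 1 - (x == i)%:R - (x' == i)%:R + (x == i)%:R * (x' == i)%:R)); last first.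
  by move=> i _; case: (x == i); case: (x' == i); rewrite /=; ring.
rewrite big_split /= !sumrB sumr_const card_ord.
rewrite (sum_ind_mul _ _ x (fun i => (x' == i)%:R)).
have S1 (a : 'I_N) : \sum_(i < N) ((a == i)%:R : R) = 1.
  by rewrite -[RHS](sum_ind_mul _ _ a (fun _ => 1)); apply: eq_bigr => l _; rewrite mulr1.
rewrite !S1.
have -> : (x' == x) = false by apply/negbTE; apply/eqP => E; rewrite E ltnn in lt.
rewrite /=; ring.
Qed.

Section Part4.
Variables (R : realType) (r : nat) (e : 'I_r -> R) (M' : nat) (j : 'I_r -> nat).
Local Notation S := (mslice M' j).
Local Notation mx := (@mexp R r e M' j).

Lemma mexpE h : mx h = (\sum_(c in S) h (mpoint e c)) / #|S|%:R.
Proof. by rewrite /mexp mulr_suml. Qed.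

Lemma mexpD h1 h2 : mx (fun x => h1 x + h2 x) = mx h1 + mx h2.
Proof. by rewrite !mexpE big_split /= mulrDl. Qed.

Lemma mexpZ a h : mx (fun x => a * h x) = a * mx h.
Proof. by rewrite !mexpE -mulr_sumr mulrA. Qed.

Lemma mexp_ext h1 h2 : h1 =1 h2 -> mx h1 = mx h2.
Proof. by move=> E; rewrite !mexpE; congr (_ / _); apply: eq_bigr => c _; rewrite E. Qed.

Lemma mexp1 h : mx h * mx (fun _ => 1) = mx h.
Proof.
have [n0|nn0] := eqVneq #|S| 0%N.
  rewrite mexpE big_pred0 ?mul0r //.
  by move=> c; apply/negbTE; rewrite (card0_eq n0).
rewrite [mx (fun _ => 1)]mexpE sumr_const divff ?mulr1 //.
by rewrite pnatr_eq0.
Qed.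

Lemma mexp_ge0 h : (forall x, 0 <= h x) -> 0 <= mx h.
Proof. by move=> H; rewrite mexpE divr_ge0 // sumr_ge0. Qed.

Lemma dir_ge0 h : 0 <= @dirichlet R r e M' j h.
Proof.
rewrite /dirichlet mulr_ge0 ?invr_ge0 ?ler0n // mexp_ge0 // => x.
by apply: sumr_ge0 => *; apply: sumr_ge0 => *; apply: sqr_ge0.
Qed.

Lemma gap_lb lam g : (lam%:E <= gap e M' j)%E ->
  lam * (mx (fun x => g x ^+ 2) - mx g ^+ 2) <= @dirichlet R r e M' j g.
Proof.
move=> Hl.
set mu := mx g; set V := mx (fun x => g x ^+ 2) - mu ^+ 2.
have E1 : mx (fun x => (g x - mu) ^+ 2) = V.
  rewrite (@mexp_ext _ (fun x => g x ^+ 2 + ((-2 * mu) * g x + mu ^+ 2 * 1))); last by move=> x; ring.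
  rewrite !mexpD !mexpZ expr2 -mulrA mexp1 -/mu /V; ring.
have E2 : mx (fun x => g x - mu) = 0.
  rewrite (@mexp_ext _ (fun x => g x + (- mu) * 1)); last by move=> x; ring.
  by rewrite mexpD mexpZ mulNr mexp1 subrr.
have ED a : @dirichlet R r e M' j (fun x => a * (g x - mu)) = a ^+ 2 * @dirichlet R r e M' j g.
  rewrite /dirichlet mulrCA; congr (_ * _); rewrite -mexpZ; apply: mexp_ext => x.
  rewrite mulr_sumr; apply: eq_bigr => i _; rewrite mulr_sumr; apply: eq_bigr => i' _.
  ring.
have hV : 0 <= V by rewrite -E1 mexp_ge0 // => x; apply: sqr_ge0.
case: (ltrP 0 V) => hV'; last first.
  have -> : V = 0 by apply/eqP; rewrite eq_le hV' hV.
  by rewrite mulr0 dir_ge0.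
pose s := (Num.sqrt V)^-1.
have s2 : s ^+ 2 = V^-1 by rewrite /s exprVn sqr_sqrtr.
have Hg : (gap e M' j <= (@dirichlet R r e M' j (fun x => s * (g x - mu)))%:E)%E.
  apply: ereal_inf_lbound; exists (fun x => s * (g x - mu)); split => //.
  - rewrite (@mexp_ext _ (fun x => s ^+ 2 * (g x - mu) ^+ 2)); last by move=> x; ring.
    by rewrite mexpZ E1 s2 mulVf // gt_eqF.
  - by rewrite mexpZ E2 mulr0.
have := le_trans Hl Hg; rewrite lee_fin ED s2 mulrC -ler_pdivlMr //.
Qed.
End Part4.

Lemma nmexp (R : realType) (r : nat) (e : 'I_r -> R) M' (j : 'I_r -> nat) h :
  #|mslice M' j|%:R * mexp e j h = \sum_(c in mslice M' j) h (mpoint e c).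
Proof.
rewrite mexpE; have [n0|nn0] := eqVneq #|mslice M' j| 0%N.
  rewrite n0 mul0r big_pred0 // => c; apply/negbTE; rewrite (card0_eq n0) //.
by rewrite mulrC divfK // pnatr_eq0.
Qed.

Lemma sq_div (R : realType) (a b : R) : a * b ^+ 2 = (a * b) ^+ 2 / a.
Proof.
have [->|a0] := eqVneq a 0; first by rewrite !mul0r expr0n /= mul0r.
by field.
Qed.

Section Part5.
Variables (R : realType) (r : nat) (e : 'I_r -> R) (M : nat) (k : 'I_r -> nat).
Variables (f : ('I_M.+1 -> R) -> R) (lam : R).
Hypothesis M2 : (1 < M)%N.
Hypothesis kpos : forall m, (0 < k m)%N.
Hypothesis lam0 : 0 <= lam.
Hypothesis Hlam : forall m, (lam%:E <= gap e M (kdec k m))%E.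

Local Notation Om := (mslice M.+1 k).
Local Notation F := (fun c : {ffun 'I_M.+1 -> 'I_r} => f (mpoint e c)).
Local Notation Ti i c := (\sum_(x < M.+1) \sum_(x' < M.+1 | (x < x')%N)
      ((x != i) && (x' != i))%:R *
      (f (swapc x x' (mpoint e c)) - f (mpoint e c)) ^+ 2).

Lemma stepC i m :
  (M%:R - 1) * lam * (\sum_(c in Om) (c i == m)%:R * F c ^+ 2
                      - @ss R r M.+1 k F i m ^+ 2 / @ww R r M.+1 k i m)
  <= \sum_(c in Om) (c i == m)%:R * Ti i c.
Proof.
have km := kpos m.
set f' := fres R r e M i m f.
set Om' := mslice M (kdec k m).
rewrite [X in _ <= X](fiber_sum _ _ _ _ _ _ km).
rewrite [X in _ <= X](eq_bigr _ (fun d _ => esym (pair_fiber _ _ e _ i m f d))) -/f'.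
have E1 : \sum_(c in Om) (c i == m)%:R * F c ^+ 2 = \sum_(d in Om') f' (mpoint e d) ^+ 2.
  by rewrite (fiber_sum _ _ _ _ _ _ km); apply: eq_bigr => d _; rewrite /f' fres_pt.
have E2 : @ss R r M.+1 k F i m = \sum_(d in Om') f' (mpoint e d).
  by rewrite /ss (fiber_sum _ _ _ _ _ _ km); apply: eq_bigr => d _; rewrite /f' fres_pt.
have E3 : @ww R r M.+1 k i m = #|Om'|%:R.
  rewrite /ww (eq_bigr (fun c : {ffun 'I_M.+1 -> 'I_r} => (c i == m)%:R * 1)); last by move=> *; rewrite mulr1.
  by rewrite (fiber_sum _ _ _ _ _ _ km) sumr_const.
have E4 : \sum_(d in Om') \sum_(j < M) \sum_(j' < M | (j < j')%N)
     (f' (swapc j j' (mpoint e d)) - f' (mpoint e d)) ^+ 2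
   = (M%:R - 1) * (#|Om'|%:R * dirichlet e (kdec k m) f').
  have HM : (M.-1)%:R = M%:R - 1 :> R by rewrite -[in RHS](prednK (ltnW M2)) -natr1 addrK.
  have HM0 : M%:R - 1 != 0 :> R by rewrite subr_eq0 pnatr_eq1 gt_eqF.
  rewrite /dirichlet [_%:R * (_^-1 * _)]mulrCA nmexp HM mulrA divff ?mul1r //.
rewrite E1 E2 E3 E4 -mulrA ler_pM2l; last by rewrite subr_gt0 ltr1n.
rewrite -(nmexp _ _ e _ _ (fun x => f' x ^+ 2)) -(nmexp _ _ e _ _ f') -sq_div.
rewrite -mulrBr mulrCA ler_wpM2l ?ler0n //.
exact: gap_lb.
Qed.

Lemma sum_ind1 n (a : 'I_n) : \sum_(l < n) ((a == l)%:R : R) = 1.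
Proof. by rewrite -[RHS](sum_ind_mul _ _ a (fun _ => 1)); apply: eq_bigr => l _; rewrite mulr1. Qed.

Hypothesis Hf2 : mexp e k (fun x => f x ^+ 2) = 1.
Hypothesis Hf0 : mexp e k f = 0.

Lemma main_real :
  lam * ((M.+1)%:R * (M%:R - 1) / M%:R ^+ 2) <= dirichlet e k f.
Proof.
have nn0 : #|Om| != 0%N.
  apply/eqP => n0; move: Hf2; rewrite mexpE n0 invr0 mulr0 => /eqP.
  by rewrite eq_sym oner_eq0.
have nr : (#|Om|%:R : R) != 0 by rewrite pnatr_eq0.
have SF2 : \sum_(c in Om) F c ^+ 2 = #|Om|%:R.
  move: Hf2; rewrite mexpE /= => H.
  by rewrite -(divfK nr (\sum_(c in Om) F c ^+ 2)) H mul1r.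
have SF0 : \sum_(c in Om) F c = 0.
  move: Hf0; rewrite mexpE /= => H.
  by rewrite -(divfK nr (\sum_(c in Om) F c)) H mul0r.
have npos : (0 < #|Om|)%N by rewrite lt0n.
have N2 : (1 < M.+1)%N by apply: ltn_trans M2 _.
have ZB := Zbound _ _ _ _ F kpos npos N2 SF0.
rewrite SF2 -natr1 addrK natr1 in ZB.
set Z := ZZ R r M.+1 k F in ZB *.
set A := \sum_(c in Om) \sum_(x < M.+1) \sum_(x' < M.+1 | (x < x')%N)
      (f (swapc x x' (mpoint e c)) - f (mpoint e c)) ^+ 2.
have DE : dirichlet e k f = M%:R^-1 * (A / #|Om|%:R) by rewrite /dirichlet mexpE.
have KT : (M%:R - 1) * A = \sum_(i < M.+1) \sum_(m < r) \sum_(c in Om) (c i == m)%:R * Ti i c.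
  rewrite /A mulr_sumr.
  rewrite (eq_bigr (fun c : {ffun 'I_M.+1 -> 'I_r} => \sum_(i < M.+1) Ti i c)); last first.
    by move=> c _; rewrite pair_total -natr1; congr (_ * _); ring.
  rewrite exchange_big /=; apply: eq_bigr => i _.
  rewrite [RHS]exchange_big /=; apply: eq_bigr => c _.
  by rewrite -mulr_suml sum_ind1 mul1r.
have LB : (M%:R - 1) * lam * ((M.+1)%:R * #|Om|%:R - Z) <= (M%:R - 1) * A.
  have E : (M.+1)%:R * #|Om|%:R - Z = \sum_(i < M.+1) \sum_(m < r)
      (\sum_(c in Om) (c i == m)%:R * F c ^+ 2 - ss R r M.+1 k F i m ^+ 2 / ww R r M.+1 k i m).
    rewrite /Z /ZZ; under [RHS]eq_bigr do rewrite sumrB.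
    rewrite sumrB; congr (_ - _).
    rewrite (eq_bigr (fun i => #|Om|%:R)); first by rewrite sumr_const card_ord mulr_natl.
    move=> i _; rewrite exchange_big /= -SF2; apply: eq_bigr => c _.
    by rewrite -mulr_suml sum_ind1 mul1r.
  rewrite E KT !mulr_sumr; apply: ler_sum => i _; rewrite mulr_sumr; apply: ler_sum => m _.
  exact: stepC.
have M1 : 0 < M%:R - 1 :> R by rewrite subr_gt0 ltr1n.
have LB' : lam * ((M.+1)%:R * #|Om|%:R - Z) <= A by rewrite -mulrA (ler_pM2l M1) in LB.
have h1 : lam * (M%:R * Z) <= lam * ((M.+1)%:R * #|Om|%:R) by exact: (@ler_wpM2l _ lam lam0 _ _ ZB).
have Mp : 0 < M%:R :> R by rewrite ltr0n; apply: ltn_trans M2.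
have np : 0 < #|Om|%:R :> R by rewrite ltr0n.
have key : lam * (M.+1)%:R * (M%:R - 1) * #|Om|%:R <= M%:R * A.
  have h2 := (@ler_wpM2l _ _ (ltW Mp) _ _ LB').
  nra.
rewrite DE.
have -> : lam * ((M.+1)%:R * (M%:R - 1) / M%:R ^+ 2) =
   (lam * (M.+1)%:R * (M%:R - 1) * #|Om|%:R) * (M%:R ^+ 2 * #|Om|%:R)^-1.
  by field; rewrite nr gt_eqF.
have -> : M%:R^-1 * (A / #|Om|%:R) = (M%:R * A) * (M%:R ^+ 2 * #|Om|%:R)^-1.
  by field; rewrite nr gt_eqF.
apply: ler_wpM2r => //.
Qed.
End Part5.

Lemma gap_ge0 (R : realType) (r : nat) (e : 'I_r -> R) M' (j : 'I_r -> nat) :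
  (0 <= gap e M' j)%E.
Proof.
apply: le_ereal_inf_tmp => y [g [_ _ ->]].
by rewrite lee_fin dir_ge0.
Qed.

Theorem theorem3p1 (R : realType) (r : nat) (e : 'I_r -> R) (N : nat)
    (k : 'I_r -> nat) :
  (2 <= r)%N -> injective e -> (3 <= N)%N ->
  (forall m, (1 <= k m)%N) -> (\sum_(m < r) k m)%N = N ->
  (((N * (N - 2))%:R / ((N - 1) ^ 2)%:R : R)%:E
     * \big[Order.min/+oo%E]_(m < r) gap e (N - 1) (kdec k m)
   <= gap e N k)%E.
Proof.
move=> _ _ HN kpos _.
case: N HN => [//|M] HN.
have M2 : (1 < M)%N by [].
have -> : (M.+1 - 1 = M)%N by rewrite subn1.
have Hc : ((M.+1 * (M.+1 - 2))%:R / (M ^ 2)%:R : R)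
          = (M.+1)%:R * (M%:R - 1) / M%:R ^+ 2.
  rewrite natrM natrX; congr (_ * _ / _).
  have -> : (M.+1 - 2 = M.-1)%N by rewrite subSS subn1.
  by rewrite -[in RHS](prednK (ltnW M2)) -natr1 addrK.
rewrite Hc; set c := (M.+1)%:R * (M%:R - 1) / M%:R ^+ 2.
have cpos : 0 < c.
  rewrite /c divr_gt0 ?exprn_gt0 ?mulr_gt0 ?ltr0n ?subr_gt0 ?ltr1n //.
  exact: ltn_trans M2.
set mu := \big[_/_]_(m < r) _.
have mu0 : (0 <= mu)%E by apply: le_bigmin => // m _; apply: gap_ge0.
have mule m : (mu <= gap e M (kdec k m))%E by apply: bigmin_le.
apply: le_ereal_inf_tmp => y [f [Hf2 Hf0 ->]].
move: mu0 mule; case: mu => [lam| |] mu0 mule.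
- rewrite -EFinM lee_fin mulrC; apply: (main_real _ _ _ _ _ _ _ M2 kpos) => //.
- exfalso.
  pose D := dirichlet e k f.
  have D0 : 0 <= D by apply: dir_ge0.
  have := @main_real R r e M k f ((D + 1) / c) M2 kpos.
  have H1 : 0 <= (D + 1) / c by rewrite divr_ge0 // ?addr_ge0 // ltW.
  move=> /(_ H1) /(_ (fun m => le_trans (leey (((D + 1) / c)%:E)) (mule m)) Hf2 Hf0).
  rewrite -/D -/c mulfVK ?gt_eqF //; lra.
- by [].
Qed.
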